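(* Let $n\in\mathbb{N}$, $a<b$, and let $f:[a,b]\to\mathbb{R}$ be $(2n-1)$-convex. If $x_1,\dots,x_n\in(a,b)$, then there exists a polynomial $p\in\Pi_{2n-1}$ such that $p(x_i)=f(x_i)$ for $i=1,\dots,n$ and $p(x)\le f(x)$ for all $x\in[a,b]$.
   Context: $\Pi_m$ denotes the set of real polynomials of degree at most $m$. Divided differences are defined recursively by $[x_1;f]:=f(x_1)$ and $[x_1,\dots,x_{m+1};f]:=\frac{[x_2,\dots,x_{m+1};f]-[x_1,\dots,x_m;f]}{x_{m+1}-x_1}$ for pairwise distinct points. For $m\in\mathbb{N}$, a function $f$ on an interval $I$ is called $m$-convex if $[x_1,\dots,x_{m+2};f]\ge 0$ for all pairwise distinct $x_1,\dots,x_{m+2}\in I$. *)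

(* Defs.v *)
From HB Require Import structures.
From mathcomp Require Import all_boot all_order all_algebra.
From mathcomp Require Import reals.
Set Implicit Arguments. Unset Strict Implicit. Unset Printing Implicit Defensive.
Import Order.TTheory GRing.Theory Num.Theory.
Local Open Scope ring_scope.

Fixpoint divdiff (R : realType) (f : R -> R) (k : nat) (x : nat -> R) (i : nat)
  : R :=
  match k with
  | 0%N => f (x i)
  | k'.+1 => (divdiff f k' x i.+1 - divdiff f k' x i) / (x (i + k'.+1)%N - x i)
  end.

Definition mconvex (R : realType) (m : nat) (a b : R) (f : R -> R) : Prop :=
  forall x : nat -> R,
    (forall i, (i < m.+2)%N -> a <= x i <= b) ->
    (forall i j, (i < m.+2)%N -> (j < m.+2)%N -> i != j -> x i != x j) ->
    0 <= divdiff f m.+1 x 0.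

(* Main.v *)
Require Import Defs.
From HB Require Import structures.
From mathcomp Require Import all_boot all_order all_algebra.
From mathcomp Require Import reals.
From mathcomp Require Import ring lra.
From mathcomp Require Import boolp classical_sets topology normedtype derive.
Import Order.TTheory GRing.Theory Num.Theory.
Import numFieldNormedType.Exports.
Local Open Scope ring_scope.
Set Implicit Arguments. Unset Strict Implicit.

Section Interp.
Variable R : fieldType.
Implicit Types (f g : R -> R) (s t : seq R).

Definition omega s : {poly R} := \prod_(z <- s) ('X - z%:P).

Fixpoint interp f s : {poly R} :=
  match s with
  | [::] => 0
  | y :: t => interp f t + ((f y - (interp f t).[y]) / (omega t).[y]) *: omega t
  end.

Definition dd f s := (interp f s)`_(size s).-1.

Lemma size_omega s : size (omega s) = (size s).+1.
Proof. exact: size_prod_XsubC. Qed.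

Lemma omega_lead s : (omega s)`_(size s) = 1.
Proof.
have := lead_coef_prod_XsubC s (fun _ => true) id.
by rewrite /lead_coef -/(omega s) size_omega.
Qed.

Lemma omega_horner s x : (omega s).[x] = \prod_(z <- s) (x - z).
Proof.
elim: s => [|z s IH]; first by rewrite /omega !big_nil hornerE.
by rewrite /omega !big_cons hornerM -/(omega s) IH hornerXsubC.
Qed.

Lemma omega_eq0 s x : ((omega s).[x] == 0) = (x \in s).
Proof.
elim: s => [|z s IH]; first by rewrite /omega big_nil hornerE oner_eq0.
by rewrite /omega big_cons hornerM -/(omega s) mulf_eq0 IH hornerXsubC subr_eq0 in_cons.
Qed.

Lemma size_interp f s : (size (interp f s) <= size s)%N.
Proof.
elim: s => [|y s IH] /=; first by rewrite size_poly0.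
apply: (leq_trans (size_polyD _ _)); rewrite geq_max (leq_trans IH) //=.
by apply: (leq_trans (size_scale_leq _ _)); rewrite size_omega.
Qed.

Lemma interp_eval f s z : uniq s -> z \in s -> (interp f s).[z] = f z.
Proof.
elim: s => [|y s IH] //= /andP[ys us]; rewrite in_cons => /orP[/eqP->|zs].
  rewrite hornerD hornerZ divfK ?omega_eq0 //; ring.
have /eqP: (omega s).[z] == 0 by rewrite omega_eq0.
by rewrite hornerD hornerZ => ->; rewrite mulr0 addr0 IH.
Qed.

Lemma interp_unique f s (p : {poly R}) : uniq s -> (size p <= size s)%N ->
  (forall z, z \in s -> p.[z] = f z) -> p = interp f s.
Proof.
move=> us sp ev; apply/eqP; rewrite -subr_eq0; apply/negPn/negP => nz.
have ar : all (root (p - interp f s)) s.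
  apply/allP => z zs.
  by rewrite /root hornerD hornerN ev // interp_eval // subrr.
have := max_poly_roots nz ar us.
by rewrite ltnNge (leq_trans (size_polyD _ _)) ?size_polyN ?geq_max ?sp ?size_interp.
Qed.

Lemma dd_cons f y s : y \notin s -> dd f (y :: s) = (f y - (interp f s).[y]) / (omega s).[y].
Proof.
move=> ys; rewrite /dd /= coefD coefZ omega_lead mulr1 nth_default ?size_interp //.
by rewrite add0r.
Qed.

Lemma interp_eq_in f g s : {in s, f =1 g} -> interp f s = interp g s.
Proof.
elim: s => [|y s IH] //= H.
rewrite IH; last by move=> z zs; apply: H; rewrite in_cons zs orbT.
by rewrite H // in_cons eqxx.
Qed.

Lemma dd_eq_in f g s : {in s, f =1 g} -> dd f s = dd g s.
Proof. by move=> H; rewrite /dd (@interp_eq_in f g s H). Qed.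

Lemma interp_perm f s t : uniq s -> perm_eq s t -> interp f s = interp f t.
Proof.
move=> us pst; have ut : uniq t by rewrite -(perm_uniq pst).
apply: interp_unique => //; first by rewrite -(perm_size pst) size_interp.
by move=> z; rewrite -(perm_mem pst); apply: interp_eval.
Qed.

Lemma dd_perm f s t : uniq s -> perm_eq s t -> dd f s = dd f t.
Proof. by move=> us pst; rewrite /dd (@interp_perm f s t us pst) (perm_size pst). Qed.

Lemma dd_reduce f c s : uniq (c :: s) -> s != [::] ->
  dd f (c :: s) = dd (fun y => (f y - f c) / (y - c)) s.
Proof.
move=> ucs sn0; set g := fun y => _.
have [cs us] : c \notin s /\ uniq s by move: ucs => /= /andP.
have E : interp f (c :: s) = (f c)%:P + ('X - c%:P) * interp g s.
  symmetry; apply: interp_unique => //.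
    apply: (leq_trans (size_polyD _ _)); rewrite geq_max size_polyC.
    apply/andP; split; first by case: (f c != 0).
    apply: (leq_trans (size_polyMleq _ _)); rewrite size_XsubC /=.
    by rewrite ltnS size_interp.
  move=> z; rewrite in_cons => /orP[/eqP->|zs].
    by rewrite hornerD hornerM hornerXsubC subrr mul0r addr0 hornerC.
  rewrite hornerD hornerM hornerXsubC hornerC interp_eval // /g.
  have zc : z - c != 0 by rewrite subr_eq0; apply: contraNneq cs => <-.
  by rewrite mulrC divfK // addrC subrK.
rewrite /dd E /= coefD coefC mulrBl coefB coefXM coefCM.
case: s sn0 {cs us ucs E} => [|y s] // _.
rewrite [X in c * X]nth_default; last by rewrite (leq_trans (size_interp _ _)).
by rewrite /= mulr0 subr0 add0r.
Qed.

End Interp.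

Lemma mkseq_cons (T : Type) (f : nat -> T) n : mkseq f n.+1 = f 0%N :: mkseq (fun j => f j.+1) n.
Proof. by rewrite /mkseq /= -(addn0 1%N) iotaDl -map_comp. Qed.

Section DD.
Variable R : realType.

Lemma dd1 (f : R -> R) z : dd f [:: z] = f z.
Proof.
rewrite /dd /= /omega big_nil coefD coefZ coefC !hornerE /=.
by rewrite subr0 divr1 -polyC1 coefC /= mulr1.
Qed.

Lemma divdiffE (f : R -> R) x k i : uniq (mkseq (fun j => x (i + j)%N) k.+1) ->
  divdiff f k x i = dd f (mkseq (fun j => x (i + j)%N) k.+1).
Proof.
elim: k i => [|k IH] i U.
  by rewrite /mkseq /= addn0 dd1.
set S := mkseq _ _.
have S1 : S = x i :: mkseq (fun j => x (i.+1 + j)%N) k.+1.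
  by rewrite /S mkseq_cons addn0; congr (_ :: _); apply: eq_mkseq => j; rewrite addnS.
have S2 : S = rcons (mkseq (fun j => x (i + j)%N) k.+1) (x (i + k.+1)%N).
  by rewrite /S mkseqS.
have UA : uniq (mkseq (fun j => x (i.+1 + j)%N) k.+1).
  by move: U; rewrite -/S S1 cons_uniq => /andP[].
have UB : uniq (mkseq (fun j => x (i + j)%N) k.+1).
  by move: U; rewrite -/S S2 rcons_uniq => /andP[].
have uA : x i \notin mkseq (fun j => x (i.+1 + j)%N) k.+1.
  by move: U; rewrite -/S S1 cons_uniq => /andP[].
have vB : x (i + k.+1)%N \notin mkseq (fun j => x (i + j)%N) k.+1.
  by move: U; rewrite -/S S2 rcons_uniq => /andP[].
have uv : x (i + k.+1)%N - x i != 0.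
  rewrite subr_eq0; apply: contraNneq vB => ->.
  by rewrite mkseq_cons in_cons addn0 eqxx.
simpl divdiff; rewrite !IH //.
set A := interp f (mkseq (fun j => x (i.+1 + j)%N) k.+1).
set B := interp f (mkseq (fun j => x (i + j)%N) k.+1).
set u := x i; set v := x (i + k.+1)%N.
pose N := (v - u)^-1 *: (('X - u%:P) * A - ('X - v%:P) * B).
have EN : N = interp f S.
  apply: interp_unique => //.
    rewrite /S size_mkseq; apply: (leq_trans (size_scale_leq _ _)).
    apply: (leq_trans (size_polyD _ _)); rewrite size_polyN geq_max.
    apply/andP; split; apply: (leq_trans (size_polyMleq _ _));
      by rewrite size_XsubC /= ?size_interp // ltnS (leq_trans (size_interp _ _)) ?size_mkseq.
  move=> z; rewrite {1}S1 in_cons => /orP[/eqP->|zA].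
    rewrite /N hornerZ hornerD hornerN !hornerM !hornerXsubC subrr mul0r add0r.
    rewrite /B interp_eval //; last by rewrite mkseq_cons in_cons addn0 eqxx.
    rewrite -/u; field; by rewrite -/u -/v in uv.
  rewrite /N hornerZ hornerD hornerN !hornerM !hornerXsubC.
  have -> : A.[z] = f z by rewrite /A interp_eval.
  have [zv|zv] := eqVneq z v.
    rewrite zv subrr mul0r subr0.
    field; by rewrite -/u -/v in uv.
  have zB : z \in mkseq (fun j => x (i + j)%N) k.+1.
    have : z \in S by rewrite S1 in_cons zA orbT.
    by rewrite S2 mem_rcons in_cons (negPf zv).
  rewrite /B interp_eval //.
  field; by rewrite -/u -/v in uv.
have sA : (size A <= k.+1)%N by rewrite (leq_trans (size_interp _ _)) // size_mkseq.
have sB : (size B <= k.+1)%N by rewrite (leq_trans (size_interp _ _)) // size_mkseq.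
rewrite /dd -EN /S size_mkseq.
rewrite -/A -/B -/u -/v; clearbody A B.
rewrite /= /N coefZ coefB !mulrBl !coefB !coefXM !coefCM /=.
rewrite !size_map !size_iota [A`_k.+1]nth_default // [B`_k.+1]nth_default //.
rewrite !mulr0 !subr0; field; by rewrite -/u -/v in uv.
Qed.

End DD.

Lemma poly_pos_near (R : realType) (p : {poly R}) c : 0 < p.[c] ->
  exists2 e : R, 0 < e & forall y, `|c - y| < e -> 0 < p.[y].
Proof.
move=> pc.
have := @continuous_horner R p c.
move=> /cvgr_gt /(_ _ pc) /nbhs_ballP [e e0 H].
exists e => // y cy; apply: H.
Qed.

Lemma avoid (R : realType) (L : seq R) c e : 0 < e ->
  exists y, c < y < c + e /\ y \notin L.
Proof.
move=> e0.
pose F := fun i : nat => c + e / (i.+2)%:R.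
have Finj : injective F.
  move=> i j /addrI /(mulfI (lt0r_neq0 e0)) /invr_inj /eqP.
  by rewrite eqr_nat => /eqP [].
pose S := mkseq F (size L).+1.
case: (boolP (has (fun y => y \notin L) S)) => [/hasP [y yS yL] | /hasPn H].
  move: yS => /mapP [i _ yE]; exists y; split => //; rewrite yE.
  have i0 : 0 < (i.+2)%:R :> R by rewrite ltr0n.
  rewrite /F ltrDl divr_gt0 //= ltrD2l ltr_pdivrMr // ltr_pMr //.
  by rewrite ltr1n.
have := uniq_leq_size (mkseq_uniq _ Finj) (fun y yS => negbNE (H y yS)).
by rewrite size_mkseq ltnn.
Qed.

Section Ext.
Local Open Scope classical_set_scope.
Variable R : realType.
Implicit Types (a b c d : R) (G : R -> R).

Definition cvx (r : nat) a b G := forall s, uniq s -> size s = r.+1 ->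
  (forall z, z \in s -> a <= z <= b) -> 0 <= dd G s.

Definition cvx_off (r : nat) a b c G := forall s, uniq s -> size s = r.+1 ->
  (forall z, z \in s -> a <= z <= b) -> c \notin s -> 0 <= dd G s.

Definition upd G c d := fun y => if y == c then d else G y.

Lemma extend0 a b c G : cvx_off 0 a b c G -> cvx 0 a b (upd G c 0).
Proof.
move=> H [|z [|w s]] //= _ _ zin; rewrite dd1 /upd.
case: eqVneq => [_|zc] //; rewrite -(dd1 G) H //= ?inE //.
by rewrite eq_sym.
Qed.

Definition pts c e n := mkseq (fun i : nat => c - e / (i.+2)%:R) n.

Lemma pts_uniq c e n : 0 < e -> uniq (pts c e n).
Proof.
move=> e0; apply: mkseq_uniq.
move=> i j /addrI /oppr_inj.
move=> /(mulfI (lt0r_neq0 e0)) /invr_inj /eqP.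
by rewrite eqr_nat => /eqP [].
Qed.

Lemma pts_mem c e n z : 0 < e -> z \in pts c e n -> c - e < z < c.
Proof.
move=> e0 /mapP [i _ ->].
have i0 : 0 < (i.+2)%:R :> R by rewrite ltr0n.
rewrite gtrDl oppr_lt0 divr_gt0 //= andbT ltrD2l ltrN2 ltr_pdivrMr // ltr_pMr //.
by rewrite ltr1n.
Qed.

Lemma pts_size c e n : size (pts c e n) = n.
Proof. exact: size_mkseq. Qed.

Lemma omega_pos c t : (forall z, z \in t -> z < c) -> 0 < (omega t).[c].
Proof.
move=> H; rewrite omega_horner big_seq prodr_gt0 // => z zt.
by rewrite subr_gt0 H.
Qed.

Lemma sgn_help (x w : R) : 0 <= x / w -> w != 0 -> 0 <= x * w.
Proof.
move=> h w0; have -> : x * w = (x / w) * (w * w) by rewrite mulrA divfK.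
by apply: mulr_ge0 => //; rewrite -expr2 sqr_ge0.
Qed.

Lemma extend (r : nat) a b c G : (0 < r)%N -> a < c < b -> cvx_off r a b c G ->
  exists d, cvx r a b (upd G c d).
Proof.
move=> r0 /andP[ac cb] H.
pose P t := [/\ uniq t, size t = r, (forall z, z \in t -> a <= z <= b) & c \notin t].
pose Lo : set R := fun l => exists t, [/\ P t, 0 < (omega t).[c] & l = (interp G t).[c]].
have compat : forall t1 t2, P t1 -> P t2 -> 0 < (omega t1).[c] -> (omega t2).[c] < 0 ->
    (interp G t1).[c] <= (interp G t2).[c].
  move=> t1 t2 [u1 s1 i1 c1] [u2 s2 i2 c2] w1 w2.
  rewrite leNgt; apply/negP => lt21.
  have P1 : 0 < (interp G t1 - interp G t2).[c] by rewrite hornerD hornerN subr_gt0.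
  have [e1 e10 E1] := poly_pos_near P1.
  have [e2 e20 E2] := poly_pos_near w1.
  have P3 : 0 < (- omega t2).[c] by rewrite hornerN oppr_gt0.
  have [e3 e30 E3] := poly_pos_near P3.
  pose e := Num.min (Num.min e1 e2) (Num.min e3 (b - c)).
  have e0 : 0 < e by rewrite !lt_min e10 e20 e30 subr_gt0 cb.
  have [y [/andP[cy ye] yt]] := avoid (t1 ++ t2) c e0.
  have dy : `|c - y| = y - c by rewrite distrC ger0_norm // subr_ge0 ltW.
  have ylt : y - c < e by rewrite ltrBlDl.
  move: ylt; rewrite !lt_min => /andP[/andP[ye1 ye2] /andP[ye3 yb]].
  have q1 := E1 y; have q2 := E2 y; have q3 := E3 y.
  rewrite dy in q1 q2 q3; move: (q1 ye1) (q2 ye2) (q3 ye3) => {q1 q2 q3}.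
  rewrite hornerD !hornerN subr_gt0 oppr_gt0 => Q1 Q2 Q3.
  move: yt; rewrite mem_cat negb_or => /andP[yt1 yt2].
  have yin : a <= y <= b by apply/andP; split; [apply: ltW; apply: (lt_trans ac) | rewrite -(subrK c y) -(subrK c b) lerD2r ltW].
  have cy' : c != y by rewrite lt_eqF.
  have h1 : 0 <= dd G (y :: t1).
    apply: H => //=; first by rewrite yt1 u1.
    - by rewrite s1.
    - by move=> z; rewrite in_cons => /orP[/eqP->|/i1].
    - by rewrite in_cons negb_or cy' c1.
  have h2 : 0 <= dd G (y :: t2).
    apply: H => //=; first by rewrite yt2 u2.
    - by rewrite s2.
    - by move=> z; rewrite in_cons => /orP[/eqP->|/i2].
    - by rewrite in_cons negb_or cy' c2.
  rewrite dd_cons // in h1; rewrite dd_cons // in h2.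
  have := sgn_help h1 (lt0r_neq0 Q2); have := sgn_help h2 (ltr0_neq0 Q3).
  move=> k2 k1; rewrite pmulr_lge0 // subr_ge0 in k1.
  rewrite nmulr_lge0 // subr_le0 in k2.
  by move: Q1; rewrite ltNge (le_trans k1 k2).
have ca : 0 < c - a by rewrite subr_gt0.
pose tlo := pts c (c - a) r.
have Plo : P tlo.
  split; [exact: pts_uniq | exact: pts_size | |].
  - move=> z /(pts_mem ca) /andP[z1 z2]; rewrite opprB addrC subrK in z1.
    by rewrite !ltW // (lt_trans z2 cb).
  - by apply/negP => /(pts_mem ca) /andP[_]; rewrite ltxx.
have wlo : 0 < (omega tlo).[c].
  by apply: omega_pos => z /(pts_mem ca) /andP[].
pose h := c + (b - c) / 2.
have ch : c < h by rewrite /h ltrDl divr_gt0 // subr_gt0.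
have hb : h < b by rewrite /h; lra.
pose tup := h :: pts c (c - a) r.-1.
have Pup : P tup.
  split.
  - rewrite /tup cons_uniq pts_uniq // andbT.
    by apply/negP => /(pts_mem ca) /andP[_ hc]; move: (lt_trans hc ch); rewrite ltxx.
  - by rewrite /= pts_size prednK.
  - move=> z; rewrite in_cons => /orP[/eqP->|].
      by rewrite !ltW // (lt_trans ac ch).
    move=> /(pts_mem ca) /andP[z1 z2]; rewrite opprB addrC subrK in z1.
    by rewrite !ltW // (lt_trans z2 cb).
  - rewrite in_cons negb_or lt_eqF //=.
    by apply/negP => /(pts_mem ca) /andP[_]; rewrite ltxx.
have wup : (omega tup).[c] < 0.
  have -> : (omega tup).[c] = (c - h) * (omega (pts c (c - a) r.-1)).[c].
    by rewrite !omega_horner big_cons.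
  rewrite nmulr_rlt0 ?subr_lt0 //.
  by apply: omega_pos => z /(pts_mem ca) /andP[].
have Lne : Lo !=set0 by exists (interp G tlo).[c]; exists tlo.
have ub : forall t, P t -> (omega t).[c] < 0 -> ubound Lo (interp G t).[c].
  by move=> t Pt wt l [t' [Pt' wt' ->]]; apply: compat.
have hs : has_sup Lo by split => //; exists (interp G tup).[c]; apply: ub.
exists (sup Lo) => s us ss sin.
case: (boolP (c \in s)) => cs; last first.
  rewrite (@dd_eq_in _ _ G); first by apply: H.
  by move=> z zs; rewrite /upd; case: eqVneq => // zc; move: cs; rewrite -zc zs.
pose t := rem c s.
have ps := perm_to_rem cs.
have ut : uniq t := rem_uniq c us.
have ct : c \notin t by rewrite /t mem_rem_uniqF.
have Pt : P t.
  split => //; first by rewrite /t size_rem // ss.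
  by move=> z /mem_rem /sin.
rewrite (dd_perm _ us ps) dd_cons // (@interp_eq_in _ _ G); last first.
  by move=> z zt; rewrite /upd; case: eqVneq => // zc; move: ct; rewrite -zc zt.
rewrite /upd eqxx.
have w0 : (omega t).[c] != 0 by rewrite omega_eq0.
rewrite neq_lt in w0; case/orP: w0 => wt.
  have : sup Lo <= (interp G t).[c] by apply: ge_sup => //; apply: ub.
  move=> le; rewrite -mulrNN -invrN divr_ge0 // ?oppr_ge0 ?subr_le0 //.
  by rewrite ltW // oppr_gt0.
have : (interp G t).[c] <= sup Lo by apply: sup_upper_bound => //; exists t.
by move=> le; rewrite divr_ge0 // ?subr_ge0 // ltW.
Qed.


End Ext.

Lemma main (R : realType) k : forall (a b : R) f xs, cvx (k.*2) a b f -> size xs = k ->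
  (forall x, x \in xs -> a < x < b) ->
  exists p : {poly R}, [/\ (size p <= k.*2)%N, (forall x, x \in xs -> p.[x] = f x)
     & (forall y, a <= y <= b -> p.[y] <= f y)].
Proof.
elim: k => [|k IH] a b f xs Hf.
  case: xs => // _ _; exists 0; split => //; first by rewrite size_poly0.
  move=> y yin; rewrite horner0 -(dd1 f); apply: Hf => //= z.
  by rewrite inE => /eqP->.
case: xs => // c xs [sx] xin.
have cin : a < c < b by apply: xin; rewrite in_cons eqxx.
have xin' : forall x, x \in xs -> a < x < b by move=> x xs'; apply: xin; rewrite in_cons xs' orbT.
have cab : a <= c <= b by case/andP: cin => *; rewrite !ltW.
pose g := fun y => (f y - f c) / (y - c).
have Hg : cvx_off (k.*2).+1 a b c g.
  move=> s us ss sin cs.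
  rewrite -dd_reduce /=; last by case: s ss {us sin cs}.
    apply: Hf => /=; first by rewrite cs us.
      by rewrite ss doubleS.
    by move=> z; rewrite in_cons => /orP[/eqP->|/sin].
  by rewrite cs us.
have [d1 Hd1] := extend (ltn0Sn _) cin Hg.
pose G1 := upd g c d1.
pose h := fun y => (G1 y - G1 c) / (y - c).
have Hh : cvx_off (k.*2) a b c h.
  move=> s us ss sin cs.
  rewrite -dd_reduce /=; last by case: s ss {us sin cs}.
    apply: Hd1 => /=; first by rewrite cs us.
      by rewrite ss.
    by move=> z; rewrite in_cons => /orP[/eqP->|/sin].
  by rewrite cs us.
have [d2 Hd2] : exists d2, cvx (k.*2) a b (upd h c d2).
  case: k {IH sx Hf Hg Hd1 Hh} (Hh) => [|k] Hh'.
    by exists 0; apply: extend0.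
  by apply: extend => //; rewrite double_gt0.
have [q [sq qx qle]] := IH a b (upd h c d2) xs Hd2 sx xin'.
exists ((f c)%:P + d1 *: ('X - c%:P) + ('X - c%:P)^+2 * q).
have key : forall y, y != c ->
    f y - ((f c)%:P + d1 *: ('X - c%:P) + ('X - c%:P)^+2 * q).[y]
    = (y - c)^+2 * (upd h c d2 y - q.[y]).
  move=> y yc; have yc0 : y - c != 0 by rewrite subr_eq0.
  rewrite /upd (negPf yc) /h /G1 /upd eqxx (negPf yc) /g !hornerE.
  by field.
have pc : ((f c)%:P + d1 *: ('X - c%:P) + ('X - c%:P)^+2 * q).[c] = f c.
  by rewrite !hornerE subrr; ring.
split.
- apply: (leq_trans (size_polyD _ _)); rewrite geq_max; apply/andP; split.
    apply: (leq_trans (size_polyD _ _)); rewrite geq_max size_polyC; apply/andP; split.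
      by case: (f c != 0).
    by apply: (leq_trans (size_scale_leq _ _)); rewrite size_XsubC doubleS.
  apply: (leq_trans (size_polyMleq _ _)); rewrite size_exp_XsubC doubleS /=.
  by rewrite add2n /= ltnS ltnS.
- move=> x; rewrite in_cons => /orP[/eqP->//|xx].
  have [->//|xc] := eqVneq x c.
  by apply/eqP; rewrite eq_sym -subr_eq0 key // qx // subrr mulr0.
- move=> y yin; have [->|yc] := eqVneq y c; first by rewrite pc.
  rewrite -subr_ge0 key // mulr_ge0 // ?sqr_ge0 // subr_ge0 qle //.
Qed.

Unset Implicit Arguments. Set Strict Implicit.

Theorem corollary2 (R : realType) (n : nat) (a b : R) (f : R -> R)
  (n_gt0 : (0 < n)%N) (ab : a < b)
  (fconv : mconvex (n.*2).-1 a b f)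
  (x : 'I_n -> R) (xin : forall i, a < x i < b) :
  exists p : {poly R},
    (size p <= n.*2)%N /\
    (forall i, p.[x i] = f (x i)) /\
    (forall y, a <= y <= b -> p.[y] <= f y).
Proof.
have n2 : (n.*2).-1.+1 = n.*2 by rewrite prednK // double_gt0.
have Hf : cvx (n.*2) a b f.
  move=> s us ss sin.
  pose xx j := nth 0 s j.
  have E : mkseq (fun j => xx (0 + j)%N) (n.*2).+1 = s.
    by rewrite -ss -[in RHS](mkseq_nth 0 s).
  have := fconv xx.
  rewrite n2 (divdiffE (R:=R)) ?E //; apply.
    by move=> i; rewrite -ss => ilt; apply: sin; apply: mem_nth.
  by move=> i j; rewrite -ss => il jl; rewrite /xx nth_uniq.
have S : size [seq x i | i <- enum 'I_n] = n by rewrite size_map size_enum_ord.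
have M : forall z, z \in [seq x i | i <- enum 'I_n] -> a < z < b by move=> z /mapP [i _ ->].
have [p [sp px ple]] := main Hf S M.
exists p; split => //; split => // i.
by apply: px; apply: map_f; rewrite mem_enum.
Qed.
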